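(* Let $p,q\ge 0$ with $p+q=1$ and $p\neq\frac12$. Let $\lambda$ be a continuous (atomless) Borel probability measure on $[0,1]$ whose distribution function $g_\lambda(x)=\lambda([0,x))$ is differentiable on $[0,1]$. Define $f(x)=2px+2q(1-x)$ and $G(x)=x\bigl(x+2q(1-x)\bigr)$, and set $g^{(1)}_\lambda=g_\lambda$ and $g^{(i)}_\lambda=G\circ g^{(i-1)}_\lambda$ for $i\ge 2$. For $n\in\mathbb{N}$ let $f^{(n)}_\lambda(x)=\prod_{i=1}^n f\bigl(g^{(i)}_\lambda(x)\bigr)$, $x\in[0,1]$. Then for every $n\in\mathbb{N}$ the function $f^{(n)}_\lambda:[0,1]\to\mathbb{R}_+$ is increasing if $p>\frac12$ and decreasing if $p<\frac12$.
   Context: The functions $f^{(n)}_\lambda$ are the Radon–Nikodym densities $d(V^n\lambda)/d\lambda$ of the iterates of the quadratic stochastic operator $(V\lambda)(A)=\int\int P(x,y,A)\,d\lambda(x)d\lambda(y)$, where for $x<y$, $P(x,y,\cdot)=q\delta_x+p\delta_y$, $P(y,x,\cdot)=P(x,y,\cdot)$ and $P(x,x,\cdot)=\delta_x$; only the explicit formulas above are needed. *)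

(* Defs.v *)
From HB Require Import structures.
From mathcomp Require Import all_boot all_order all_algebra.
From mathcomp Require Import all_classical all_reals all_analysis.
Set Implicit Arguments. Unset Strict Implicit. Unset Printing Implicit Defensive.
Import Order.TTheory GRing.Theory Num.Theory.
Import numFieldNormedType.Exports.
Local Open Scope classical_set_scope.
Local Open Scope ring_scope.

Section Defs.
Variable R : realType.

Definition distr_fun (mu : set R -> \bar R) (x : R) : R :=
  fine (mu [set` `[0, x[]).

Definition fQ (p q x : R) : R := 2 * p * x + 2 * q * (1 - x).

Definition GQ (q x : R) : R := x * (x + 2 * q * (1 - x)).

Definition g_iter (q : R) (g : R -> R) (i : nat) (x : R) : R :=
  iter i.-1 (GQ q) (g x).

Definition f_dens (p q : R) (g : R -> R) (n : nat) (x : R) : R :=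
  \prod_(1 <= i < n.+1) fQ p q (g_iter q g i x).

Definition differentiable_on01 (h : R -> R) : Prop :=
  forall x : R, x \in `[0, 1] ->
    cvg ((fun y => (h y - h x) / (y - x)) @
         within (fun y : R => y \in `[0, 1] /\ y != x) (nbhs x)).

End Defs.

(* Main.v *)
Require Import Defs.
From HB Require Import structures.
From mathcomp Require Import all_boot all_order all_algebra.
From mathcomp Require Import all_classical all_reals all_analysis.
Import Order.TTheory GRing.Theory Num.Theory.
Import numFieldNormedType.Exports.
Local Open Scope classical_set_scope.
Local Open Scope ring_scope.

From mathcomp Require Import ring lra.
Set Implicit Arguments.

Lemma g01 (R : realType) (mu : probability R R) x :
  0 <= distr_fun mu x <= 1.
Proof.
rewrite /distr_fun.
have m : measurable [set` `[0, x[] := measurable_itv _.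
apply/andP; split; first exact: fine_ge0 (measure_ge0 _ _).
have h1 := probability_le1 mu m.
rewrite -lee_fin fineK //.
rewrite ge0_fin_numE ?(measure_ge0 _ _) //.
by apply: le_lt_trans h1 _; rewrite ltry.
Qed.

Lemma gmono (R : realType) (mu : probability R R) x y : x <= y ->
  distr_fun mu x <= distr_fun mu y.
Proof.
move=> xy; rewrite /distr_fun.
have mx : measurable [set` `[0, x[] := measurable_itv _.
have my : measurable [set` `[0, y[] := measurable_itv _.
have fin (A : set R) : measurable A -> mu A \is a fin_num.
  move=> mA; rewrite ge0_fin_numE ?(measure_ge0 _ _) //.
  by apply: le_lt_trans (probability_le1 mu mA) _; rewrite ltry.
apply: fine_le; [exact: fin|exact: fin|].
apply: le_measure; rewrite ?inE //.
apply: subset_itv => //; by rewrite bnd_simp.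
Qed.

Lemma G01 (R : realType) (q a : R) : 0 <= q <= 1 -> 0 <= a <= 1 ->
  0 <= GQ q a <= 1.
Proof.
rewrite /GQ => /andP[? ?] /andP[? ?].
have h1 : 0 <= (1 - a) * (1 + a - 2 * q * a) by apply: mulr_ge0; nra.
have h2 : 0 <= a * (a + 2 * q * (1 - a)) by apply: mulr_ge0; nra.
apply/andP; split; nra.
Qed.

Lemma Gmono (R : realType) (q a b : R) : 0 <= q <= 1 -> 0 <= a -> b <= 1 -> a <= b ->
  GQ q a <= GQ q b.
Proof.
rewrite /GQ => /andP[? ?] ? ? ?.
have h1 : 0 <= (b - a) * ((1 - q) * (a + b)) by apply: mulr_ge0; nra.
have h2 : 0 <= (b - a) * (q * (2 - a - b)) by apply: mulr_ge0; nra.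
nra.
Qed.

Lemma iter01 (R : realType) (q a : R) k : 0 <= q <= 1 -> 0 <= a <= 1 ->
  0 <= iter k (GQ q) a <= 1.
Proof. move=> hq ha; elim: k => //= k IH; exact: G01. Qed.

Lemma itermono (R : realType) (q a b : R) k : 0 <= q <= 1 -> 0 <= a <= 1 ->
  0 <= b <= 1 -> a <= b -> iter k (GQ q) a <= iter k (GQ q) b.
Proof.
move=> hq ha hb ab; elim: k => //= k IH.
have /andP[? ?] := @iter01 R q a k hq ha; have /andP[? ?] := @iter01 R q b k hq hb.
exact: Gmono.
Qed.
Theorem proposition4p1 (R : realType) (p q : R)
  (mu : probability R R)
  (hp : 0 <= p) (hq : 0 <= q) (hpq : p + q = 1) (hp12 : p != 2^-1)
  (hsupp : mu (~` [set` `[0, 1]]) = 0%E)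
  (hatomless : forall x : R, mu [set x] = 0%E)
  (hdiff : differentiable_on01 (distr_fun mu)) :
  forall n : nat, (0 < n)%N ->
    (forall x, x \in `[0, 1] -> 0 <= f_dens p q (distr_fun mu) n x) /\
    (2^-1 < p -> forall x y, x \in `[0, 1] -> y \in `[0, 1] -> x <= y ->
        f_dens p q (distr_fun mu) n x <= f_dens p q (distr_fun mu) n y) /\
    (p < 2^-1 -> forall x y, x \in `[0, 1] -> y \in `[0, 1] -> x <= y ->
        f_dens p q (distr_fun mu) n y <= f_dens p q (distr_fun mu) n x).
Proof.
move=> n _.
have hq1 : 0 <= q <= 1 by apply/andP; split; lra.
have I01 i x : 0 <= g_iter q (distr_fun mu) i x <= 1.
  rewrite /g_iter; exact: iter01 hq1 (g01 mu x).
have Im i x y : x <= y -> g_iter q (distr_fun mu) i x <= g_iter q (distr_fun mu) i y.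
  move=> xy; rewrite /g_iter; have h := (@itermono R q _ _ i.-1 hq1 (g01 mu x) (g01 mu y) (gmono mu _ _ xy)); exact h.
have F0 a : 0 <= a <= 1 -> 0 <= fQ p q a.
  rewrite /fQ => /andP[a0 a1].
  have h1 : 0 <= p * a by apply: mulr_ge0.
  have h2 : 0 <= q * (1 - a) by apply: mulr_ge0; lra.
  rewrite -mulrA -(mulrA 2 q); lra.
split; [|split].
- move=> x _; apply: prodr_ge0 => i _; exact: F0.
- move=> hp2 x y _ _ xy; apply: ler_prod => i _; apply/andP; split; first exact: F0.
  have := Im i _ _ xy; rewrite /fQ; set a := g_iter _ _ _ x; set b := g_iter _ _ _ y => ab.
  have h : 0 <= (p - q) * (b - a) by apply: mulr_ge0; lra.
  rewrite -subr_ge0.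
  have -> : 2 * p * b + 2 * q * (1 - b) - (2 * p * a + 2 * q * (1 - a)) = 2 * ((p - q) * (b - a)) by ring.
  by apply: mulr_ge0.
- move=> hp2 x y _ _ xy; apply: ler_prod => i _; apply/andP; split; first exact: F0.
  have := Im i _ _ xy; rewrite /fQ; set a := g_iter _ _ _ x; set b := g_iter _ _ _ y => ab.
  have h : 0 <= (q - p) * (b - a) by apply: mulr_ge0; lra.
  rewrite -subr_ge0.
  have -> : 2 * p * a + 2 * q * (1 - a) - (2 * p * b + 2 * q * (1 - b)) = 2 * ((q - p) * (b - a)) by ring.
  by apply: mulr_ge0.
Qed.
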